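(* Let $n\ge2$, let $g^{ij}=\delta^{i,n+1-j}$ be the anti-diagonal constant contravariant metric on $\mathbb R^n$, and let $S_0=\sum_{i=0}^{n-2}\xi_i\mu^{(n;i)}$ with constants $\xi_i$ and $\xi_0\neq0$. Then: (1) if $n\not\equiv1\pmod 3$, there exists an orthogonal transformation (a change of coordinates preserving $g$) which brings $S_0$ to $\mu^{(n;0)}$; (2) if $n\equiv1\pmod3$ and $n\neq4$, there exists an orthogonal transformation which brings $S_0$ to $\mu^{(n;0)}+\kappa\,\mu^{(n;\frac{n-1}{3})}$ for some constant $\kappa$.
   Context: For integers $n\ge1$, $k\ge0$ the symmetric bivector $\mu^{(n;k)}$ has components $\mu^{(n;k)ij}=[3(i+j)-2(n+2-k)]\,u^{i+j-1+k}$, $i,j=1,\dots,n$, with the convention $u^\beta\equiv0$ for $\beta>n$. Bivectors are transformed by coordinate changes in the usual tensorial way. *)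

(* Defs.v *)
From HB Require Import structures.
From mathcomp Require Import all_boot all_order all_algebra.
From mathcomp Require Import reals.
Set Implicit Arguments. Unset Strict Implicit. Unset Printing Implicit Defensive.
Import Order.TTheory GRing.Theory Num.Theory.
Local Open Scope ring_scope.

(* Coordinates on R^n are column vectors u : 'cV_n; indices are 0-based,
   so paper index i (1..n) corresponds to ordinal i-1. *)

(* u^beta (0-based beta), with u^beta = 0 when beta is out of range. *)
Definition ucomp (R : nzRingType) (n : nat) (u : 'cV[R]_n) (b : nat) : R :=
  if @insub _ (fun x => x < n)%N 'I_n b is Some l then u l ord0 else 0.

(* mu^{(n;k) ij} = [3(i+j) - 2(n+2-k)] u^{i+j-1+k}  (1-based);
   with i = i0+1, j = j0+1 the 0-based index of u is i0+j0+k. *)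
Definition mu (R : nzRingType) (n k : nat) (u : 'cV[R]_n) : 'M[R]_n :=
  \matrix_(i < n, j < n)
    (((3 * ((i : nat) + j + 2))%N%:R - 2 * (n%:R + 2 - k%:R))
       * ucomp u (i + j + k)%N).

Definition gmetric (R : nzRingType) (n : nat) : 'M[R]_n :=
  \matrix_(i < n, j < n) ((i + j)%N == n.-1)%:R.

Definition g_orthogonal (R : nzRingType) (n : nat) (A : 'M[R]_n) : Prop :=
  A *m gmetric R n *m A^T = gmetric R n.

(* the bivector S (a function of u) is brought to T by u~ = A u:
   A^a_i A^b_j S^{ij}(u) = T^{ab}(A u) for all u *)
Definition brings (R : nzRingType) (n : nat) (A : 'M[R]_n)
  (S T : 'cV[R]_n -> 'M[R]_n) : Prop :=
  forall u : 'cV[R]_n, A *m S u *m A^T = T (A *m u).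
Arguments mu {R} n k u.

(* Main.v *)
Require Import Defs.
From HB Require Import structures.
From mathcomp Require Import all_boot all_order all_algebra.
From mathcomp Require Import reals ring zify.
Set Implicit Arguments. Unset Strict Implicit. Unset Printing Implicit Defensive.
Import Order.TTheory GRing.Theory Num.Theory.
Local Open Scope ring_scope.
Section Gen.
Variable R : comNzRingType.
Variable n : nat.

Definition wX (m a : nat) : R := (2*a + 1 + m)%N%:R - n%:R.
Definition Xm (m : nat) : 'M[R]_n :=
  \matrix_(i < n, j < n) (((j : nat) == i + m)%N%:R * wX m i).
Definition muc (k s : nat) : R := (3 * (s + 2))%N%:R - 2 * (n%:R + 2 - k%:R).

Lemma muE k (u : 'cV[R]_n) i j : mu n k u i j = muc k (i + j) * ucomp u (i + j + k).
Proof. by rewrite mxE. Qed.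

Lemma ucomp_lt (u : 'cV[R]_n) b (H : (b < n)%N) : ucomp u b = u (Ordinal H) ord0.
Proof. by rewrite /ucomp insubT. Qed.

Lemma ucomp_ge (u : 'cV[R]_n) b : (n <= b)%N -> ucomp u b = 0.
Proof. by move=> H; rewrite /ucomp insubF // ltnNge H. Qed.

Lemma sum_pick_lt (f : 'I_n -> R) K (H : (K < n)%N) :
  \sum_(l < n) ((l : nat) == K)%N%:R * f l = f (Ordinal H).
Proof.
rewrite (bigD1 (Ordinal H)) //= eqxx mul1r big1 ?addr0 // => l Hl.
case: eqP => [E|]; last by rewrite mul0r.
by move: Hl; rewrite -(inj_eq val_inj) /= E eqxx.
Qed.

Lemma sum_pick_ge (f : 'I_n -> R) K : (n <= K)%N ->
  \sum_(l < n) ((l : nat) == K)%N%:R * f l = 0.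
Proof.
move=> HK; rewrite big1 // => l _; case: eqP => [E|]; last by rewrite mul0r.
by move: (ltn_ord l); rewrite E ltnNge HK.
Qed.

Lemma ucompX m (v : 'cV[R]_n) b : ucomp (Xm m *m v) b = wX m b * ucomp v (b + m).
Proof.
case: (ltnP b n) => Hb; last by rewrite !ucomp_ge ?mulr0 // (leq_trans Hb) ?leq_addr.
rewrite ucomp_lt mxE.
under eq_bigr => l _ do rewrite mxE -mulrA.
case: (ltnP (b + m) n) => H; last by rewrite sum_pick_ge // ucomp_ge ?mulr0.
by rewrite (sum_pick_lt _ H) (ucomp_lt _ H) mulrC.
Qed.

Lemma XmuL m k v (i j : 'I_n) :
  (Xm m *m mu n k v) i j = wX m i * muc k (i + m + j) * ucomp v (i + j + k + m).
Proof.
rewrite mxE.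
under eq_bigr => l _ do rewrite mxE -mulrA.
case: (ltnP (i + m) n) => H.
  rewrite (sum_pick_lt _ H) muE /= -mulrA.
  by congr (_ * (_ * ucomp _ _)); rewrite -!addnA; congr (_ + _)%N; rewrite addnC addnA.
rewrite sum_pick_ge // ucomp_ge ?mulr0 //.
apply: leq_trans H _; lia.
Qed.

Lemma XmuR m k v (i j : 'I_n) :
  (mu n k v *m (Xm m)^T) i j = wX m j * muc k (i + j + m) * ucomp v (i + j + k + m).
Proof.
rewrite mxE.
under eq_bigr => l _ do rewrite [(Xm m)^T _ _]mxE [Xm m _ _]mxE mulrCA.
case: (ltnP (j + m) n) => H.
  rewrite (sum_pick_lt _ H) muE /= mulrC mulrA.
  have -> : (i + (j + m) + k = i + j + k + m)%N by lia.
  by have -> : (i + (j + m) = i + j + m)%N by lia.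
rewrite (@sum_pick_ge _ (j + m)%N) // ucomp_ge ?mulr0 //.
apply: leq_trans H _; lia.
Qed.

Lemma key m k v :
  Xm m *m mu n k v + mu n k v *m (Xm m)^T =
  ((3 * m + 1)%N%:R - n%:R - (2 * k)%N%:R) *: mu n (k + m) v + mu n k (Xm m *m v).
Proof.
apply/matrixP => i j; rewrite [LHS]mxE [RHS]mxE XmuL XmuR [X in _ = X + _]mxE !muE ucompX.
rewrite -!mulrA !addnA; set U := ucomp v _.
rewrite /wX /muc !natrD; ring.
Qed.
End Gen.
Lemma F0 (R : nzRingType) : (false%:R : R) = 0. Proof. by []. Qed.
Lemma T1 (R : nzRingType) : (true%:R : R) = 1. Proof. by []. Qed.
Section Gen2.
Variable R : comNzRingType.
Variable n : nat.

Lemma gE i j : gmetric R n i j = ((i + j)%N == n.-1)%:R.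
Proof. by rewrite mxE. Qed.

Lemma skew m : Xm R n m *m gmetric R n + gmetric R n *m (Xm R n m)^T = 0.
Proof.
apply/matrixP => i j; rewrite [LHS]mxE !mxE.
under eq_bigr => l _ do rewrite [Xm _ _ _ _ _]mxE -mulrA.
under [X in _ + X]eq_bigr => l _ do rewrite [(Xm _ _ _)^T _ _]mxE [Xm _ _ _ _ _]mxE mulrCA.
have Hn : (0 < n)%N by apply: leq_ltn_trans (ltn_ord i).
case: (ltnP (i + m) n) => H1; last first.
  rewrite sum_pick_ge // add0r.
  case: (ltnP (j + m) n) => H2; last by rewrite sum_pick_ge.
  rewrite (sum_pick_lt _ H2) gE /=.
  case: eqP => E; last by rewrite F0 ?mul0r ?mulr0.
  exfalso; move: H1 (ltn_ord j); lia.
rewrite (sum_pick_lt _ H1) gE /=.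
case: (ltnP (j + m) n) => H2; last first.
  rewrite sum_pick_ge // addr0; case: eqP => E; last by rewrite F0 ?mul0r ?mulr0.
  exfalso; move: H2 (ltn_ord i); lia.
rewrite (sum_pick_lt _ H2) gE /=.
rewrite (_ : (i + (j + m))%N = (i + m + j)%N); last by lia.
case: eqP => E; last by rewrite F0 mul0r mulr0 addr0.
rewrite T1 mul1r mulr1 /wX.
rewrite addrACA -opprD -!natrD.
by rewrite (_ : (2 * i + 1 + m + (2 * j + 1 + m) = n + n)%N) ?subrr //; move: E; lia.
Qed.

Lemma upper_pow (M : 'M[R]_n) :
  (forall i j : 'I_n, (j <= i)%N -> M i j = 0) ->
  forall p (i j : 'I_n), (j < i + p)%N -> (M ^+ p) i j = 0.
Proof.
move=> HM; elim=> [|p IH] i j Hij.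
  by rewrite expr0 mxE; case: eqP => // E; move: Hij; rewrite E addn0 ltnn.
rewrite exprSr mxE big1 // => l _.
case: (ltnP l (i + p)) => Hl; first by rewrite IH ?mul0r.
by rewrite HM ?mulr0 //; move: Hl Hij; lia.
Qed.

Lemma Xm_upper m : (0 < m)%N -> forall i j : 'I_n, (j <= i)%N -> Xm R n m i j = 0.
Proof. move=> Hm i j H; rewrite mxE; case: eqP => E; last by rewrite F0 ?mul0r ?mulr0.
by move: H; rewrite E; lia. Qed.

Lemma Xm_nil m p (i j : 'I_n) : (0 < m)%N -> (n <= p)%N -> ((Xm R n m) ^+ p) i j = 0.
Proof. move=> Hm Hp; apply: upper_pow; first exact: Xm_upper.
by move: (ltn_ord j) Hp; lia. Qed.

Lemma mu_zero k (u : 'cV[R]_n) : (n.-1 <= k)%N -> mu n k u = 0.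
Proof.
move=> Hk; apply/matrixP => i j; rewrite muE mxE.
case: (ltnP (i + j + k) n) => H; last by rewrite ucomp_ge ?mulr0.
have Hi : (i = 0 :> nat)%N by move: H Hk; lia.
have Hj : (j = 0 :> nat)%N by move: H Hk; lia.
have Ek : k = n.-1 by move: H Hk; lia.
have Hn : (0 < n)%N by apply: leq_ltn_trans (ltn_ord i).
rewrite /muc Hi Hj Ek /=.
have -> : (n%:R : R) = (n.-1)%:R + 1 by rewrite natr1 prednK.
ring.
Qed.
End Gen2.

Section Maps.
Variables (R S : comNzRingType) (f : {rmorphism R -> S}) (n : nat).

Lemma map_ucomp (v : 'cV[R]_n) b : f (ucomp v b) = ucomp (map_mx f v) b.
Proof. by rewrite /ucomp; case: insubP => [l _ _|_]; rewrite ?mxE ?rmorph0. Qed.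

Lemma map_muc k s : f (muc R n k s) = muc S n k s.
Proof.
rewrite /muc; apply: (etrans (rmorphB f _ _)); congr (_ - _); first exact: rmorph_nat.
apply: (etrans (rmorphM f _ _)); congr (_ * _); first exact: rmorph_nat.
apply: (etrans (rmorphB f _ _)); congr (_ - _); last exact: rmorph_nat.
apply: (etrans (rmorphD f _ _)); congr (_ + _); exact: rmorph_nat.
Qed.

Lemma map_mu k (v : 'cV[R]_n) : map_mx f (mu n k v) = mu n k (map_mx f v).
Proof.
apply/matrixP => i j; rewrite mxE !muE rmorphM map_ucomp; congr (_ * _).
exact: map_muc.
Qed.

Lemma map_Xm m : map_mx f (Xm R n m) = Xm S n m.
Proof.
apply/matrixP => i j; rewrite !mxE; apply: (etrans (rmorphM f _ _)).
congr (_ * _); first exact: rmorph_nat.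
by rewrite /wX; apply: (etrans (rmorphB f _ _)); congr (_ - _); exact: rmorph_nat.
Qed.

Lemma map_g : map_mx f (gmetric R n) = gmetric S n.
Proof. by apply/matrixP => i j; rewrite !mxE; exact: rmorph_nat. Qed.
End Maps.
Section Poly.
Variable R : numFieldType.
Variable n : nat.
Local Notation P := {poly R}.

Definition Dm a b (M : 'M[P]_(a, b)) : 'M[P]_(a, b) := map_mx deriv M.

Lemma DmD a b (A B : 'M[P]_(a, b)) : Dm (A + B) = Dm A + Dm B.
Proof. by apply/matrixP => i j; rewrite !mxE derivD. Qed.

Lemma DmB a b (A B : 'M[P]_(a, b)) : Dm (A - B) = Dm A - Dm B.
Proof. by apply/matrixP => i j; rewrite !mxE derivB. Qed.

Lemma Dm0 a b : Dm (0 : 'M[P]_(a, b)) = 0.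
Proof. by apply/matrixP => i j; rewrite !mxE deriv0. Qed.

Lemma Dm_sum a b I (r : seq I) (Pr : pred I) (F : I -> 'M[P]_(a, b)) :
  Dm (\sum_(i <- r | Pr i) F i) = \sum_(i <- r | Pr i) Dm (F i).
Proof. exact: (big_morph _ (@DmD a b) (@Dm0 a b)). Qed.

Lemma DmM a b c (A : 'M[P]_(a, b)) (B : 'M[P]_(b, c)) :
  Dm (A *m B) = Dm A *m B + A *m Dm B.
Proof.
apply/matrixP => i j; rewrite !mxE (big_morph _ (@derivD _) (@deriv0 _)) -big_split /=.
by apply: eq_bigr => l _; rewrite derivM !mxE.
Qed.

Lemma DmT a b (A : 'M[P]_(a, b)) : Dm A^T = (Dm A)^T.
Proof. by apply/matrixP => i j; rewrite !mxE. Qed.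

Lemma DmZ a b q (A : 'M[P]_(a, b)) : Dm (q *: A) = deriv q *: A + q *: Dm A.
Proof. by apply/matrixP => i j; rewrite !mxE derivM. Qed.

Lemma DmC a b (A : 'M[R]_(a, b)) : Dm (map_mx polyC A) = 0.
Proof. by apply/matrixP => i j; rewrite !mxE derivC. Qed.

Lemma mucP k s : muc P n k s = (muc R n k s)%:P.
Proof. by rewrite (map_muc polyC). Qed.

Lemma Dmu k (v : 'cV[P]_n) : Dm (mu n k v) = mu n k (Dm v).
Proof.
apply/matrixP => i j; rewrite mxE !muE mucP derivM derivC mul0r add0r; congr (_ * _).
by rewrite /ucomp; case: insubP => [l _ _|_]; rewrite ?mxE ?deriv0.
Qed.

Lemma mu0v k : mu n k (0 : 'cV[P]_n) = 0.
Proof.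
apply/matrixP => i j; rewrite muE mxE /ucomp; case: insubP => [l _ _|_];
by rewrite ?mxE mulr0.
Qed.

Lemma uniq0 (X : 'M[R]_n) (F : 'M[P]_n) :
  Dm F = map_mx polyC X *m F + F *m (map_mx polyC X)^T ->
  (forall i j, (F i j)`_0 = 0) -> F = 0.
Proof.
move=> HD H0.
suff H : forall k i j, (F i j)`_k = 0.
  by apply/matrixP => i j; apply/polyP => k; rewrite H mxE coef0.
elim=> [|k IH] i j; first exact: H0.
have := congr1 (fun M : 'M[P]_n => (M i j)`_k) HD.
rewrite !mxE coef_deriv coefD !coef_sum big1 ?add0r; last first.
  by move=> l _; rewrite !mxE coefCM IH mulr0.
rewrite big1; last by move=> l _; rewrite !mxE mulrC coefCM IH mulr0.
by move/eqP; rewrite mulrn_eq0 /= => /eqP.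
Qed.

Definition ef (a : nat) : R := (a`!%:R)^-1.

Definition Ep (X : 'M[R]_n) : 'M[P]_n :=
  \matrix_(i, j) \poly_(a < n) (ef a * (X ^+ a) i j).

Lemma efS a : ef a.+1 *+ a.+1 = ef a.
Proof.
have H1 : (a.+1%:R : R) != 0 by rewrite pnatr_eq0.
have H2 : (a`!%:R : R) != 0 by rewrite pnatr_eq0 -lt0n fact_gt0.
rewrite /ef factS natrM -mulr_natr; field.
by rewrite H2 addrC natr1 H1.
Qed.

Lemma DEp X : X ^+ n = 0 -> Dm (Ep X) = map_mx polyC X *m Ep X.
Proof.
move=> Hn; apply/matrixP => i j; rewrite !mxE; apply/polyP => a.
rewrite coef_deriv coef_poly coef_sum.
under eq_bigr => l _ do rewrite !mxE coefCM coef_poly.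
case: (ltnP a n) => Ha; last first.
  have -> : (a.+1 < n)%N = false by apply/negbTE; rewrite -leqNgt; lia.
  rewrite mul0rn big1 // => l _.
  by rewrite mulr0.
under eq_bigr => l _ do rewrite mulrCA.
rewrite -mulr_sumr.
have -> : \sum_l X i l * (X ^+ a) l j = (X ^+ a.+1) i j by rewrite exprS mxE.
case: ltnP => Ha1.
  by rewrite -mulrnAl efS.
have -> : a.+1 = n by apply/eqP; rewrite eqn_leq Ha1 Ha.
by rewrite Hn mxE mulr0 mul0rn.
Qed.

Lemma Ep0 X i j : (0 < n)%N -> (Ep X i j)`_0 = (1%:M : 'M[R]_n) i j.
Proof. by move=> Hn; rewrite mxE coef_poly Hn /ef expr0 invr1 mul1r. Qed.
End Poly.
Section Conj.
Variable R : numFieldType.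
Variables (n m : nat).
Hypothesis Hm : (0 < m)%N.
Hypothesis Hn : (0 < n)%N.
Local Notation P := {poly R}.
Local Notation X := (Xm R n m).
Local Notation Xp := (map_mx polyC (Xm R n m)).
Local Notation E := (Ep X).

Definition gam K : R := (3 * m + 1)%N%:R - n%:R - (2 * K)%N%:R.
Definition pc k j : R := \prod_(r < j) gam (k + r * m).
Definition RHSp k (U : 'cV[P]_n) : 'M[P]_n :=
  \sum_(j < n.+1) ((ef R j * pc k j)%:P * 'X^j) *: mu n (k + j * m) (E *m U).

Lemma XpE : Xp = Xm P n m.
Proof. exact: map_Xm. Qed.

Lemma Xnil : X ^+ n = 0.
Proof. by apply/matrixP => i j; rewrite Xm_nil // mxE. Qed.

Lemma DE : Dm E = Xp *m E.
Proof. exact: DEp Xnil. Qed.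

Lemma gamP K : ((3 * m + 1)%N%:R - n%:R - (2 * K)%N%:R : P) = (gam K)%:P.
Proof. by rewrite /gam !polyCB !polyC_natr. Qed.

Lemma keyP K v : Xp *m mu n K v + mu n K v *m Xp^T =
  (gam K)%:P *: mu n (K + m) v + mu n K (Xp *m v).
Proof. by rewrite XpE key gamP. Qed.

Lemma DRHS k u : let U := map_mx polyC u in
  Dm (RHSp k U) = Xp *m RHSp k U + RHSp k U *m Xp^T.
Proof.
move=> U; set V := E *m U.
have DV : Dm V = Xp *m V by rewrite /V DmM DmC mulmx0 addr0 DE mulmxA.
rewrite /RHSp Dm_sum mulmx_sumr mulmx_suml -big_split /=.
under eq_bigr => j _ do rewrite DmZ Dmu DV.
under [in RHS]eq_bigr => j _ do rewrite -scalemxAr -scalemxAl -scalerDr keyP scalerDr scalerA.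
rewrite !big_split /=; congr (_ + _).
rewrite big_ord_recl big_ord_recr /= expr0 mulr1 derivC scale0r add0r.
rewrite mu_zero ?scaler0 ?addr0; last by move: Hm; rewrite /=; nia.
apply: eq_bigr => j _.
rewrite (_ : bump 0 j = j.+1) // derivM derivC mul0r add0r derivXn /= mulSnr addnA; congr (_ *: _).
rewrite mulrnAr -mulrnAl -polyCMn mulrAC -polyCM; congr (_ * _); congr (_%:P).
by rewrite /pc big_ord_recr /= -mulrnAl efS mulrA.
Qed.

Lemma coef0ev (F : 'M[P]_n) i j : (F i j)`_0 = (map_mx (horner_eval 0) F) i j.
Proof. by rewrite mxE horner_evalE horner_coef0. Qed.

Lemma evE : map_mx (horner_eval 0) E = 1%:M.
Proof. by apply/matrixP => i j; rewrite -coef0ev Ep0. Qed.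

Lemma evU (x : R) a b (u : 'M[R]_(a, b)) : map_mx (horner_eval x) (map_mx polyC u) = u.
Proof. by apply/matrixP => i j; rewrite !mxE horner_evalE hornerC. Qed.

Lemma evRHS k u : map_mx (horner_eval 0) (RHSp k (map_mx polyC u)) = mu n k u.
Proof.
rewrite /RHSp map_mx_sum big_ord_recl big1 ?addr0.
  rewrite map_mxZ map_mu map_mxM evE evU mul1mx /= horner_evalE expr0 mulr1 hornerC.
  by rewrite /ef /pc big_ord0 mulr1 invr1 scale1r mul0n addn0.
move=> j _; rewrite map_mxZ /= horner_evalE hornerCM hornerXn expr0n /=.
by rewrite mulr0 scale0r.
Qed.

Lemma conjP k u : let U := map_mx polyC u in E *m mu n k U *m E^T = RHSp k U.
Proof.
move=> U; pose F := E *m mu n k U *m E^T - RHSp k U.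
suff : F = 0 :> 'M[P]_n by move/eqP; rewrite subr_eq0 => /eqP.
apply: (@uniq0 R n X).
  rewrite /F DmB DRHS !DmM DmT DE Dmu DmC mu0v mulmx0 addr0 trmx_mul.
  rewrite mulmxBr mulmxBl !mulmxA opprD !addrA; congr (_ - _).
  by rewrite addrAC.
move=> i j; rewrite coef0ev map_mxB !map_mxM -map_trmx evE map_mu evU evRHS.
by rewrite mul1mx trmx1 mulmx1 subrr mxE.
Qed.

Lemma orthP : E *m gmetric P n *m E^T = gmetric P n.
Proof.
pose F := E *m gmetric P n *m E^T - gmetric P n.
suff : F = 0 :> 'M[P]_n by move/eqP; rewrite subr_eq0 => /eqP.
have Hg : gmetric P n = map_mx polyC (gmetric R n) by rewrite map_g.
apply: (@uniq0 R n X).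
  rewrite /F DmB !DmM DmT DE Hg DmC mulmx0 addr0 trmx_mul subr0.
  rewrite -Hg mulmxBr mulmxBl !mulmxA.
  have := skew P n m; rewrite -XpE => Hs.
  by rewrite addrACA -opprD Hs oppr0 addr0.
move=> i j; rewrite coef0ev map_mxB !map_mxM -map_trmx evE Hg evU.
by rewrite mul1mx trmx1 mulmx1 subrr mxE.
Qed.
End Conj.
Section Real.
Variable R : numFieldType.
Variables (n m : nat) (t : R).
Hypothesis Hm : (0 < m)%N.
Hypothesis Hn : (0 < n)%N.

Definition At : 'M[R]_n := map_mx (horner_eval t) (Ep (Xm R n m)).

Lemma At_orth : g_orthogonal At.
Proof.
rewrite /g_orthogonal /At -(map_g (horner_eval t) n) map_trmx -!map_mxM.
by rewrite orthP.
Qed.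

Lemma At_brings k : brings At (mu n k)
  (fun v => \sum_(j < n.+1) (ef R j * pc R n m k j * t ^+ j) *: mu n (k + j * m) v).
Proof.
move=> u /=; have := congr1 (map_mx (horner_eval t)) (conjP Hm Hn k u).
rewrite !map_mxM -map_trmx map_mu evU => ->.
rewrite /RHSp map_mx_sum; apply: eq_bigr => j _.
by rewrite map_mxZ map_mu map_mxM evU /= horner_evalE hornerCM hornerXn.
Qed.
End Real.
Section Comb.
Variable R : numFieldType.
Variable n : nat.
Hypothesis Hn : (0 < n)%N.

Definition Sfam (c : nat -> R) (v : 'cV[R]_n) : 'M[R]_n :=
  \sum_(0 <= k < n) c k *: mu n k v.

Lemma pick_nat N K (f : nat -> R) :
  \sum_(0 <= l < N) ((l == K)%:R * f l) = if (K < N)%N then f K else 0.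
Proof.
elim: N => [|N IH]; first by rewrite big_geq.
rewrite big_nat_recr //= IH.
case: (ltngtP K N) => H.
- by rewrite (_ : (K < N.+1)%N) ?mul0r ?addr0 //; lia.
- by rewrite (_ : (K < N.+1)%N = false) ?mul0r ?addr0 //; lia.
- by rewrite H ltnSn mul1r add0r.
Qed.

Lemma pick_mu K (a : R) (v : 'cV[R]_n) :
  \sum_(0 <= l < n) (((K == l)%:R * a) *: mu n l v) = a *: mu n K v.
Proof.
have H : forall N, (N <= n)%N -> \sum_(0 <= l < N) (((K == l)%:R * a) *: mu n l v) =
   if (K < N)%N then a *: mu n K v else 0.
  elim=> [|N IH] HN; first by rewrite big_geq.
  rewrite big_nat_recr //= IH ?(ltnW HN) //.
  case: (ltngtP K N) => H.
  - by rewrite (_ : (K < N.+1)%N) ?mul0r ?scale0r ?addr0 //; lia.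
  - by rewrite (_ : (K < N.+1)%N = false) ?mul0r ?scale0r ?addr0 //; lia.
  - by rewrite H ltnSn mul1r add0r.
rewrite H //; case: ltnP => // HK.
by rewrite mu_zero ?scaler0 //; apply: leq_trans HK; apply: leq_pred.
Qed.

Definition cstep m t (c : nat -> R) K :=
  \sum_(0 <= k < n) \sum_(0 <= j < n.+1)
    (((k + j * m)%N == K)%:R * (c k * (ef R j * pc R n m k j * t ^+ j))).

Lemma step_brings m t c : (0 < m)%N ->
  brings (At n m t) (Sfam c) (Sfam (cstep m t c)).
Proof.
move=> Hm u; rewrite /Sfam /cstep mulmx_sumr mulmx_suml.
under eq_bigr => k _ do rewrite -scalemxAr -scalemxAl (At_brings t Hm Hn).
under [RHS]eq_bigr => K _ do rewrite !scaler_suml.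
rewrite exchange_big /=; apply: eq_bigr => k _.
under [RHS]eq_bigr => K _ do rewrite scaler_suml.
rewrite exchange_big /= scaler_sumr big_mkord; apply: eq_bigr => j _.
by rewrite pick_mu scalerA.
Qed.

Lemma sum_zero_nat a b (f : nat -> R) : (forall i, (a <= i < b)%N -> f i = 0) ->
  \sum_(a <= i < b) f i = 0.
Proof. by move=> H; rewrite big_nat big1 // => i; exact: H. Qed.

Lemma cstep_lt m t c K : (0 < m)%N -> (K < m)%N -> (K < n)%N -> cstep m t c K = c K.
Proof.
move=> Hm HKm HKn; rewrite /cstep exchange_big /= big_ltn //.
rewrite (@sum_zero_nat 1 n.+1) ?addr0; last first.
  move=> j /andP [Hj _]; rewrite (@sum_zero_nat 0 n) // => k _.
  rewrite (_ : (k + j * m == K) = false) ?mul0r //.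
  apply/negbTE; rewrite neq_ltn; apply/orP; right.
  by apply: leq_trans HKm _; move: Hj; nia.
under eq_bigr => k _ do rewrite mul0n addn0.
by rewrite pick_nat HKn /ef /pc big_ord0 expr0 invr1 !mulr1.
Qed.

Lemma cstep_m m t c : (0 < m)%N -> (m < n)%N ->
  cstep m t c m = c m + c 0%N * (t * gam R n m 0).
Proof.
move=> Hm Hmn; rewrite /cstep exchange_big /= big_ltn // [X in _ + X]big_ltn //.
rewrite (@sum_zero_nat 2 n.+1) ?addr0; last first.
  move=> j /andP [Hj _]; rewrite (@sum_zero_nat 0 n) // => k _.
  rewrite (_ : ((k + j * m)%N == m) = false) ?mul0r //.
  apply/negbTE; rewrite neq_ltn; apply/orP; right.
  by move: Hj Hm; nia.
under eq_bigr => k _ do rewrite mul0n addn0.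
rewrite pick_nat Hmn /ef /pc big_ord0 expr0 invr1 !mulr1; congr (_ + _).
under eq_bigr => k _ do rewrite mul1n (_ : (k + m == m) = (k == 0)%N) ?(eqn_add2r m k 0) //.
rewrite pick_nat Hn big_ord1 /= expr1 mul0n addn0.
ring.
Qed.
End Comb.
Section Final.
Variable R : numFieldType.
Variable n : nat.
Hypothesis Hn : (0 < n)%N.

Lemma brings_comp (A B : 'M[R]_n) S T U :
  brings A S T -> brings B T U -> brings (B *m A) S U.
Proof.
by move=> HA HB u; rewrite -[B *m A *m u]mulmxA -HB -HA trmx_mul !mulmxA.
Qed.

Lemma orth_comp (A B : 'M[R]_n) : g_orthogonal A -> g_orthogonal B ->
  g_orthogonal (B *m A).
Proof.
rewrite /g_orthogonal => HA HB.
have -> : B *m A *m gmetric R n *m (B *m A)^T =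
  B *m (A *m gmetric R n *m A^T) *m B^T by rewrite trmx_mul !mulmxA.
by rewrite HA.
Qed.

Lemma brings_ext (A : 'M[R]_n) S T T' : brings A S T -> (forall v, T v = T' v) ->
  brings A S T'.
Proof. by move=> H E u; rewrite -E. Qed.

Lemma orth1 : g_orthogonal (1%:M : 'M[R]_n).
Proof. by rewrite /g_orthogonal trmx1 mul1mx mulmx1. Qed.

Lemma brings1 S : brings (1%:M : 'M[R]_n) S S.
Proof. by move=> u; rewrite trmx1 mul1mx mulmx1 mul1mx. Qed.

Definition good M (c : nat -> R) := c 0%N = 1 /\
  forall K, (0 < K)%N -> (K < M)%N -> (3 * K + 1 != n)%N -> c K = 0.

Lemma reduce M : (0 < M)%N -> (M <= n)%N -> forall c : nat -> R, c 0%N = 1 ->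
  exists (A : 'M[R]_n) c', g_orthogonal A /\ brings A (Sfam c) (Sfam c') /\ good M c'.
Proof.
elim: M => [//|M IH] _ HMn c Hc.
case: (posnP M) => HM0.
  exists 1%:M, c; split; first exact: orth1.
  split; first exact: brings1.
  by split=> // K HK; rewrite HM0; lia.
have [A [c' [oA [bA [g0 gK]]]]] := IH HM0 (ltnW HMn) c Hc.
pose g := gam R n M 0.
pose t := if (3 * M + 1 != n)%N then - c' M / g else 0.
exists (At n M t *m A), (cstep n M t c'); split.
  by apply: orth_comp => //; exact: At_orth.
split; first by apply: brings_comp bA _; exact: step_brings.
split; first by rewrite cstep_lt.
move=> K HK0 HKM HKn.
case: (ltngtP K M) => HK.
- by rewrite cstep_lt ?gK //; apply: ltn_trans HMn.
- by move: HKM HK; lia.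
rewrite HK cstep_m // g0 mul1r /t.
move: HKn; rewrite HK => HKn; rewrite HKn.
have gn0 : g != 0 by rewrite /g /gam muln0 subr0 subr_eq0 eqr_nat.
by rewrite divfK // addrN.
Qed.

Definition Dsc (nu lam : R) : 'M[R]_n := diag_mx (\row_(a < n) (nu * lam ^+ a)).

Lemma ucomp_Dsc nu lam (u : 'cV[R]_n) b :
  ucomp (Dsc nu lam *m u) b = nu * lam ^+ b * ucomp u b.
Proof.
case: (ltnP b n) => Hb; last by rewrite !ucomp_ge ?mulr0.
by rewrite !ucomp_lt mul_diag_mx !mxE.
Qed.

Lemma Dsc_orth nu lam : nu ^+ 2 * lam ^+ n.-1 = 1 -> g_orthogonal (Dsc nu lam).
Proof.
move=> H; rewrite /g_orthogonal tr_diag_mx mul_diag_mx mul_mx_diag.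
apply/matrixP => i j; rewrite !mxE.
case: eqP => E; last by rewrite F0 mulr0 mul0r.
by rewrite T1 mulr1 mulrACA -expr2 -exprD E H.
Qed.

Lemma Dsc_mu nu lam k (u : 'cV[R]_n) : lam != 0 ->
  Dsc nu lam *m mu n k u *m (Dsc nu lam)^T = (nu / lam ^+ k) *: mu n k (Dsc nu lam *m u).
Proof.
move=> Hl; rewrite tr_diag_mx mul_diag_mx mul_mx_diag.
apply/matrixP => i j; rewrite !mxE ucomp_Dsc !exprD.
have Hk : lam ^+ k != 0 by exact: expf_neq0.
by field.
Qed.

Lemma Dsc_brings nu lam c : lam != 0 ->
  brings (Dsc nu lam) (Sfam c) (Sfam (fun k => c k * nu / lam ^+ k)).
Proof.
move=> Hl u; rewrite /Sfam mulmx_sumr mulmx_suml; apply: eq_bigr => k _.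
by rewrite -scalemxAr -scalemxAl Dsc_mu // scalerA mulrA.
Qed.
End Final.
Lemma root_ex (R : rcfType) (p : nat) (a : R) : (0 < p)%N -> 0 < a ->
  exists x : R, x != 0 /\ x ^+ p = a.
Proof.
move=> Hp Ha.
have H01 : (0 : R) <= 1 + a by rewrite addr_ge0 // ltW.
have H1a : (1 : R) <= 1 + a by rewrite lerDl ltW.
have Hle : a <= (1 + a) ^+ p.
  have E : (1 + a) ^+ p = (1 + a) * (1 + a) ^+ p.-1 by rewrite -exprS prednK.
  rewrite E; apply: le_trans (ler_peMr _ _); last exact: exprn_ege1.
    by rewrite lerDr ler01.
  exact: H01.
have [|x _ Hx] := @poly_ivt R ('X^p - a%:P) 0 (1 + a) H01.
  rewrite !hornerE expr0n (negbTE (lt0n_neq0 Hp)) sub0r oppr_le0 (ltW Ha) /=.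
  by rewrite subr_ge0.
move: Hx; rewrite rootE !hornerE subr_eq0 => /eqP Hx.
exists x; split=> //; apply/eqP => E; move: Hx; rewrite E expr0n (negbTE (lt0n_neq0 Hp)).
by move=> E0; move: Ha; rewrite -E0 ltxx.
Qed.
Theorem proposition4 (R : realType) (n : nat) (xi : nat -> R) :
  (2 <= n)%N -> xi 0%N != 0 ->
  let S0 := fun u : 'cV[R]_n => \sum_(0 <= i < n.-1) xi i *: mu n i u in
  ((n %% 3 != 1)%N ->
     exists A : 'M[R]_n, g_orthogonal A /\ brings A S0 (mu n 0)) /\
  ((n %% 3 == 1)%N -> n != 4%N ->
     exists (A : 'M[R]_n) (kappa : R), g_orthogonal A /\
       brings A S0 (fun u => mu n 0 u + kappa *: mu n ((n - 1) %/ 3) u)).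
Proof.
move=> Hn2 Hxi S0.
have Hn : (0 < n)%N by apply: leq_trans Hn2.
have HS0 : forall u, S0 u = Sfam xi u.
  move=> u; rewrite /S0 /Sfam.
  have E : forall F : nat -> 'M[R]_n,
      \sum_(0 <= i < n) F i = \sum_(0 <= i < n.-1.+1) F i by move=> F; rewrite prednK.
  by rewrite E big_nat_recr //= mu_zero // scaler0 addr0.
have Hp : (0 < n.-1)%N by move: Hn2; lia.
have Ha : 0 < xi 0%N ^+ 2 by rewrite exprn_even_gt0 //= Hxi orbT.
have [lam [Hl Hlam]] := root_ex Hp Ha.
pose nu := (xi 0%N)^-1.
have Hnl : nu ^+ 2 * lam ^+ n.-1 = 1 by rewrite Hlam -exprMn mulVf // expr1n.
pose c1 := fun k => xi k * nu / lam ^+ k.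
have Hc1 : c1 0%N = 1 by rewrite /c1 expr0 divr1 mulfV.
have [A [c' [oA [bA [g0 gK]]]]] := reduce Hn Hn (leqnn n) Hc1.
pose T := A *m Dsc n nu lam.
have oT : g_orthogonal T by apply: orth_comp => //; exact: Dsc_orth.
have bT : brings T S0 (Sfam c').
  apply: brings_comp bA; move=> u; rewrite HS0; exact: Dsc_brings.
split.
  move=> Hmod; exists T; split=> //; apply: brings_ext bT _ => v.
  rewrite /Sfam; transitivity (\sum_(0 <= k < n) (((0 == k)%N%:R * 1) *: mu n k v)).
    apply: eq_big_nat => k Hk; case: (posnP k) => [->|Hk0]; first by rewrite g0 eqxx mul1r.
    rewrite gK //; last by apply/eqP => E; move: Hmod; rewrite -E; lia.
    by rewrite scale0r (_ : (0 == k)%N = false) ?mul0r ?scale0r //; lia.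
  rewrite pick_mu //; apply/matrixP => i j; rewrite mxE; ring.
move=> Hmod Hn4; set k0 := ((n - 1) %/ 3)%N.
have Hk0 : (3 * k0 + 1 = n)%N by rewrite /k0; move: Hmod; lia.
exists T, (c' k0); split=> //; apply: brings_ext bT _ => v.
rewrite /Sfam; transitivity (\sum_(0 <= k < n)
  ((((0 == k)%N%:R * 1) *: mu n k v) + (((k0 == k)%N%:R * c' k0) *: mu n k v))).
  apply: eq_big_nat => k Hk; case: (posnP k) => [->|Hk0'].
    rewrite g0 eqxx mul1r (_ : (k0 == 0)%N = false) ?mul0r ?scale0r ?addr0 //.
    by move: Hk0 Hn2; lia.
  rewrite (_ : (0 == k)%N = false) ?mul0r ?scale0r ?add0r; last by lia.
  case: (eqVneq k0 k) => [<-|Hne]; first by rewrite mul1r.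
  rewrite mul0r scale0r gK //; first by rewrite scale0r.
  by apply/eqP => E; move: Hne; rewrite -E in Hk0; lia.
rewrite big_split /= !pick_mu //; congr (_ + _).
by apply/matrixP => i j; rewrite mxE; ring.
Qed.
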